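(* Let $I$ be an ideal on a cardinal $\kappa$ and $\theta<\kappa$ a regular cardinal. The following are equivalent: (1) $I$ is weakly $\theta$-saturated and $\theta$-indecomposable. (2) Whenever $\langle S_\alpha:\alpha<\kappa\rangle$ is a sequence of sets of ordinals with $|S_\alpha|<\theta$ for all $\alpha$, every $\leq$-increasing sequence $\langle h_i:i<\theta\rangle$ of functions in $\prod_{\alpha<\kappa}S_\alpha$ (i.e. $i<j$ implies $h_i(\alpha)\leq h_j(\alpha)$ for all $\alpha$) is eventually constant modulo $I$: there is $i^*<\theta$ with $\{\alpha: h_i(\alpha)\neq h_{i^*}(\alpha)\}\in I$ for all $i\geq i^*$.
   Context: By an ideal on a cardinal $\kappa$ we mean a proper ideal on $\kappa$ containing all bounded subsets of $\kappa$. $I$ is weakly $\theta$-saturated if there is no partition of $\kappa$ into $\theta$ pairwise disjoint sets not in $I$. $I$ is $\theta$-indecomposable if whenever $\langle A_i:i<\theta\rangle$ are subsets of $\kappa$ with $\bigcup_{i<\theta}A_i\notin I$, there is $w\subseteq\theta$ with $|w|<\theta$ and $\bigcup_{i\in w}A_i\notin I$. *)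

(* Defs.v *)
(* Sets are predicates X -> Prop.
   Cardinals/ordinals are represented by well-ordered types. *)

Definition full {X : Type} : X -> Prop := fun _ => True.

Definition card_le {X Y : Type} (A : X -> Prop) (B : Y -> Prop) : Prop :=
  exists f : {x : X | A x} -> {y : Y | B y}, forall a b, f a = f b -> a = b.

Definition card_lt {X Y : Type} (A : X -> Prop) (B : Y -> Prop) : Prop :=
  card_le A B /\ ~ card_le B A.

Definition well_order {X : Type} (lt : X -> X -> Prop) : Prop :=
  well_founded lt /\
  (forall x y z, lt x y -> lt y z -> lt x z) /\
  (forall x, ~ lt x x) /\
  (forall x y, lt x y \/ x = y \/ lt y x).

Definition is_cardinal {X : Type} (lt : X -> X -> Prop) : Prop :=
  well_order lt /\ forall x : X, card_lt (fun y => lt y x) (@full X).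

Definition infinite_type (X : Type) : Prop := card_le (@full nat) (@full X).

Definition regular_cardinal {X : Type} (lt : X -> X -> Prop) : Prop :=
  is_cardinal lt /\ infinite_type X /\
  forall A : X -> Prop,
    (forall x, exists y, A y /\ ~ lt y x) -> ~ card_lt A (@full X).

Definition is_ideal {K : Type} (ltK : K -> K -> Prop)
    (I : (K -> Prop) -> Prop) : Prop :=
  ~ I (@full K) /\
  (forall A B : K -> Prop, I B -> (forall a, A a -> B a) -> I A) /\
  (forall A B : K -> Prop, I A -> I B -> I (fun a => A a \/ B a)) /\
  (forall A : K -> Prop, (exists b, forall a, A a -> ltK a b) -> I A).

Definition weakly_saturated {K : Type} (Th : Type)
    (I : (K -> Prop) -> Prop) : Prop :=
  ~ exists P : Th -> K -> Prop,
      (forall i j a, i <> j -> P i a -> P j a -> False) /\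
      (forall a, exists i, P i a) /\
      (forall i, ~ I (P i)).

Definition indecomposable {K : Type} (Th : Type)
    (I : (K -> Prop) -> Prop) : Prop :=
  forall A : Th -> K -> Prop,
    ~ I (fun a => exists i, A i a) ->
    exists w : Th -> Prop,
      card_lt w (@full Th) /\ ~ I (fun a => exists i, w i /\ A i a).

(* Main.v *)
Require Import Defs.
From Stdlib Require Import Classical ClassicalEpsilon FunctionalExtensionality ProofIrrelevance.

Lemma sig_eq {X} (A : X -> Prop) (a b : {x | A x}) : proj1_sig a = proj1_sig b -> a = b.
Proof. destruct a as [x p], b as [y q]; simpl; intros ->. f_equal; apply proof_irrelevance. Qed.

Lemma card_le_trans {X Y Z} (A : X -> Prop) (B : Y -> Prop) (C : Z -> Prop) :
  card_le A B -> card_le B C -> card_le A C.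
Proof. intros [f Hf] [g Hg]. exists (fun a => g (f a)). intros a b H. apply Hf, Hg, H. Qed.

Lemma card_le_sub {X} (A B : X -> Prop) : (forall x, A x -> B x) -> card_le A B.
Proof.
  intros H. exists (fun a => exist B (proj1_sig a) (H _ (proj2_sig a))).
  intros a b E. apply (f_equal (@proj1_sig _ _)) in E. apply sig_eq. exact E.
Qed.

Lemma card_le_full {X} (A : X -> Prop) : card_le A (@full X).
Proof. apply card_le_sub. intros; exact I. Qed.

Lemma small_sub {X Y W} (A : X -> Prop) (B : Y -> Prop) :
  card_le A B -> card_lt B (@full W) -> card_lt A (@full W).
Proof.
  intros H [H1 H2]. split.
  - eapply card_le_trans; eauto.
  - intro H3. apply H2. eapply card_le_trans; eauto.
Qed.

Lemma bounded {Th} (ltT : Th -> Th -> Prop) (A : Th -> Prop) :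
  regular_cardinal ltT -> card_lt A (@full Th) -> exists x, forall y, A y -> ltT y x.
Proof.
  intros [_ [_ R]] cA. apply NNPP; intro H. apply (R A); auto.
  intro x. apply NNPP; intro Hn. apply H. exists x. intros y Ay.
  apply NNPP; intro. apply Hn; eauto.
Qed.

Lemma inhab {Th} (ltT : Th -> Th -> Prop) : regular_cardinal ltT -> exists t : Th, True.
Proof. intros [_ [[f _] _]]. exists (proj1_sig (f (exist _ 0 I))). exact I. Qed.

Lemma succ {Th} (ltT : Th -> Th -> Prop) : regular_cardinal ltT -> forall t, exists x, ltT t x.
Proof.
  intros HT t. destruct (bounded ltT (fun y => y = t) HT) as [x Hx].
  - split; [apply card_le_full|]. intros [g Hg].
    destruct HT as [_ [[f Hf] _]].
    set (e := fun n => f (exist full n I)).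
    assert (E : g (e 0) = g (e 1)).
    { apply sig_eq. rewrite (proj2_sig (g (e 0))), (proj2_sig (g (e 1))). reflexivity. }
    apply Hg in E. apply Hf in E.
    apply (f_equal (@proj1_sig _ _)) in E. simpl in E. discriminate.
  - exists x. apply Hx. reflexivity.
Qed.

Lemma wf_min {X} (R : X -> X -> Prop) (P : X -> Prop) : well_founded R ->
  forall y, P y -> exists m, P m /\ forall k, R k m -> ~ P k.
Proof.
  intros wf y. induction y as [y IH] using (well_founded_ind wf). intro Py.
  destruct (classic (exists k, R k y /\ P k)) as [[k [Rk Pk]]|N].
  - apply (IH k Rk Pk).
  - exists y; split; auto. intros k Rk Pk; apply N; eauto.
Qed.

Lemma dir21 (K : Type) (ltK : K -> K -> Prop)
    (Th : Type) (ltT : Th -> Th -> Prop) (I : (K -> Prop) -> Prop) :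
  regular_cardinal ltT -> is_ideal ltK I ->
   (forall (O : Type) (ltO : O -> O -> Prop), well_order ltO ->
    forall S : K -> O -> Prop,
      (forall a, card_lt (S a) (@full Th)) ->
    forall h : Th -> K -> O,
      (forall i a, S a (h i a)) ->
      (forall i j a, ltT i j -> ltO (h i a) (h j a) \/ h i a = h j a) ->
      exists istar : Th,
        forall i, ~ ltT i istar -> I (fun a => h i a <> h istar a)) ->
  forall p : K -> Th, exists t, I (fun a => ltT t (p a)).
Proof.
  intros HT HI H2 p.
  pose proof HT as [[[wf [tr [irr tri]]] seg] _].
  destruct HI as [_ [down _]].
  set (h := fun i a => if excluded_middle_informative (ltT i (p a)) then i else p a).
  destruct (H2 Th ltT (proj1 (proj1 HT)) (fun a j => ~ ltT (p a) j)) with (h := h)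
    as [istar Hst].
  - intro a. destruct (succ ltT HT (p a)) as [x Hx].
    apply small_sub with (B := fun y => ltT y x); [|apply seg].
    apply card_le_sub. intros j Hj.
    destruct (tri j (p a)) as [H|[H|H]]; [eauto| subst; auto | contradiction].
  - intros i a; unfold h; destruct (excluded_middle_informative _).
    + intro; apply (irr i); eauto.
    + apply irr.
  - intros i j a Hij; unfold h.
    destruct (excluded_middle_informative (ltT i (p a))),
             (excluded_middle_informative (ltT j (p a))); auto.
    exfalso; eauto.
  - destruct (succ ltT HT istar) as [x Hx]. exists istar.
    apply (down _ _ (Hst x (fun H => irr _ (tr _ _ _ H Hx)))).
    intros a Ha. unfold h.
    destruct (excluded_middle_informative (ltT x (p a))),
             (excluded_middle_informative (ltT istar (p a))); try contradiction.
    + intro E; subst; apply (irr _ Hx).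
    + intro E; rewrite E in Ha; apply (irr _ Ha).
Qed.

Lemma dir12 (K : Type) (ltK : K -> K -> Prop)
    (Th : Type) (ltT : Th -> Th -> Prop) (I : (K -> Prop) -> Prop) (k0 : K) (t0 : Th) :
  regular_cardinal ltT -> is_ideal ltK I ->
  weakly_saturated Th I -> indecomposable Th I ->
   (forall (O : Type) (ltO : O -> O -> Prop), well_order ltO ->
    forall S : K -> O -> Prop,
      (forall a, card_lt (S a) (@full Th)) ->
    forall h : Th -> K -> O,
      (forall i a, S a (h i a)) ->
      (forall i j a, ltT i j -> ltO (h i a) (h j a) \/ h i a = h j a) ->
      exists istar : Th,
        forall i, ~ ltT i istar -> I (fun a => h i a <> h istar a)).
Proof.
  intros HT HI WS IND O ltO [_ [trO [irrO _]]] S HS h HSh hmono.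
  pose proof HT as [[[wf [tr [irr tri]]] segsmall] _].
  destruct HI as [_ [down [union bnd]]].
  assert (asym : forall x y, ltT x y -> ltT y x -> False) by (intros x y H1 H2; apply (irr x); eauto).
  assert (hle : forall i j a, ~ ltT j i -> ltO (h i a) (h j a) \/ h i a = h j a).
  { intros i j a H. destruct (tri i j) as [?|[?|?]]; [apply hmono; auto| subst; right; auto | contradiction]. }
  assert (anti : forall x y, (ltO x y \/ x = y) -> (ltO y x \/ y = x) -> x = y).
  { intros x y [?|?] [?|?]; auto. exfalso; apply (irrO x); eauto. }
  set (A := fun i a => forall j, ~ ltT j i -> h j a = h i a).
  assert (F1 : forall a, exists i, A i a).
  { intro a. set (F := fun i => forall k, ltT k i -> h k a <> h i a).
    assert (cF : card_lt F (@full Th)).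
    { apply small_sub with (B := S a); [| apply HS].
      exists (fun s => exist (S a) (h (proj1_sig s) a) (HSh _ _)).
      intros [i Fi] [i' Fi'] E. apply sig_eq; simpl.
      apply (f_equal (@proj1_sig _ _)) in E; simpl in E.
      destruct (tri i i') as [l|[e|l]]; auto.
      - exfalso; exact (Fi' i l E).
      - exfalso; exact (Fi i' l (eq_sym E)). }
    destruct (bounded ltT F HT cF) as [x Hx]. exists x. intros j Hj.
    destruct (wf_min ltT (fun m => h m a = h j a) wf j eq_refl) as [j0 [E0 M0]].
    assert (Fj0 : F j0).
    { intros k Hk E. apply (M0 k Hk). rewrite E; exact E0. }
    assert (Hj0x : ltT j0 x) by (apply Hx; exact Fj0).
    apply anti.
    - rewrite <- E0; apply hle; intro; eauto.
    - apply hle; exact Hj. }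
  assert (nlt : forall i j k, ~ ltT k j -> ~ ltT j i -> ~ ltT k i).
  { intros i j k H1 H2 H3. destruct (tri j k) as [l|[e|l]].
    - apply H2; eauto.
    - subst; auto.
    - auto. }
  assert (Amono : forall i j a, ~ ltT j i -> A i a -> A j a).
  { intros i j a Hji Ai k Hk. rewrite (Ai k), (Ai j); auto. eapply nlt; eauto. }
  assert (I0 : forall B : K -> Prop, (forall a, ~ B a) -> I B).
  { intros B HB. apply bnd. exists k0. intros a Ba; contradiction (HB a Ba). }
  apply NNPP; intro Hno.
  assert (Hn : forall i, ~ I (fun a => ~ A i a)).
  { intros i Hi. apply Hno. exists i. intros j Hj. apply (down _ _ Hi).
    intros a Ha HAi; exact (Ha (HAi j Hj)). }
  assert (step : forall i, exists b, ltT i b /\ ~ I (fun a => ~ A i a /\ A b a)).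
  { intro i. destruct (IND (fun j a => ~ A i a /\ A j a)) as [w [cw Hw]].
    - intro HU. apply (Hn i). apply (down _ _ HU). intros a Ha.
      destruct (F1 a) as [j Hj]; eauto.
    - destruct (bounded ltT w HT cw) as [b Hb].
      assert (Hb2 : ~ I (fun a => ~ A i a /\ A b a)).
      { intro Hc. apply Hw. apply (down _ _ Hc). intros a [j [wj [na Aj]]].
        split; auto. apply (Amono j b a); auto. intro; eauto. }
      exists b; split; auto.
      destruct (tri i b) as [?|[e|l]]; auto; exfalso; apply Hb2; apply I0; intros a [na Ab].
      + subst; auto.
      + apply na; apply (Amono b i a); auto. intro; eauto. }
  set (f := fun i => proj1_sig (constructive_indefinite_description _ (step i))).
  assert (fspec : forall i, ltT i (f i) /\ ~ I (fun a => ~ A i a /\ A (f i) a)).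
  { intro i. unfold f. destruct (constructive_indefinite_description _ _) as [b Hb]; simpl; exact Hb. }
  set (FZ := fun (z : Th) (rec : forall z', ltT z' z -> Prop) =>
               forall z' (hz : ltT z' z), rec z' hz -> ~ ltT z (f z')).
  set (Z := Fix wf (fun _ => Prop) FZ).
  assert (Zeq : forall z, Z z = forall z', ltT z' z -> Z z' -> ~ ltT z (f z')).
  { intro z. unfold Z. rewrite Fix_eq. reflexivity.
    intros x g1 g2 Hg. assert (g1 = g2) by (extensionality y; extensionality q; apply Hg).
    subst; reflexivity. }
  set (P := fun z a => ~ A z a /\ A (f z) a).
  assert (disj : forall z z' a, ltT z' z -> Z z -> Z z' -> P z' a -> P z a -> False).
  { intros z z' a Hl Zz Zz' [_ H1] [H2 _]. rewrite Zeq in Zz.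
    apply H2. apply (Amono (f z') z a); auto. }
  assert (cof : forall x, exists y, Z y /\ ~ ltT y x).
  { intro x. apply NNPP; intro N.
    assert (Hb : forall y, Z y -> ltT y x) by (intros y Zy; apply NNPP; intro; apply N; eauto).
    set (B := fun b => exists z, Z z /\ f z = b).
    assert (cB : card_lt B (@full Th)).
    { apply small_sub with (B := fun y => ltT y x); [| apply segsmall].
      assert (ch : forall s : {b | B b}, {z | Z z /\ f z = proj1_sig s})
        by (intro s; apply constructive_indefinite_description; exact (proj2_sig s)).
      exists (fun s => exist (fun y => ltT y x) (proj1_sig (ch s)) (Hb _ (proj1 (proj2_sig (ch s))))).
      intros s1 s2 E. apply (f_equal (@proj1_sig _ _)) in E; simpl in E. apply sig_eq.
      rewrite <- (proj2 (proj2_sig (ch s1))), <- (proj2 (proj2_sig (ch s2))), E. reflexivity. }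
    destruct (bounded ltT B HT cB) as [bB HbB].
    set (y := if excluded_middle_informative (ltT x bB) then bB else x).
    assert (y1 : ~ ltT y x) by (unfold y; destruct (excluded_middle_informative _); eauto).
    assert (y2 : ~ ltT y bB) by (unfold y; destruct (excluded_middle_informative _); eauto).
    assert (Zy : Z y).
    { rewrite Zeq. intros z' _ Zz' Hlt. apply y2. eapply tr; [exact Hlt|]. apply HbB; exists z'; auto. }
    exact (y1 (Hb y Zy)). }
  assert (cZ : card_le (@full Th) Z).
  { destruct HT as [_ [_ R]]. apply NNPP; intro H. apply (R Z cof). split; [apply card_le_full|auto]. }
  destruct cZ as [g Hg].
  set (g' := fun i => proj1_sig (g (exist full i Logic.I))).
  assert (gZ : forall i, Z (g' i)) by (intro i; exact (proj2_sig (g (exist full i Logic.I)))).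
  assert (ginj : forall i j, g' i = g' j -> i = j).
  { intros i j E. apply sig_eq in E. apply Hg in E. apply (f_equal (@proj1_sig _ _)) in E. exact E. }
  apply WS. exists (fun i a => P (g' i) a \/ (i = t0 /\ forall j, ~ P (g' j) a)).
  split; [|split].
  - intros i j a nij Hi Hj. destruct Hi as [Hi|[ei Hi]], Hj as [Hj|[ej Hj]].
    + assert (ne : g' i <> g' j) by (intro E; apply nij, ginj, E).
      destruct (tri (g' i) (g' j)) as [l|[e|l]].
      * exact (disj _ _ a l (gZ j) (gZ i) Hi Hj).
      * contradiction.
      * exact (disj _ _ a l (gZ i) (gZ j) Hj Hi).
    + exact (Hj i Hi).
    + exact (Hi j Hj).
    + apply nij; congruence.
  - intro a. destruct (classic (exists j, P (g' j) a)) as [[j Hj]|N].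
    + exists j; left; auto.
    + exists t0; right; split; auto. intros j Hj; apply N; eauto.
  - intros i Hi. apply (proj2 (fspec (g' i))). apply (down _ _ Hi).
    intros a Ha; left; exact Ha.
Qed.

Theorem proposition2p4 (K : Type) (ltK : K -> K -> Prop)
    (Th : Type) (ltT : Th -> Th -> Prop) (I : (K -> Prop) -> Prop) :
  is_cardinal ltK ->
  regular_cardinal ltT ->
  card_lt (@full Th) (@full K) ->
  is_ideal ltK I ->
  ((weakly_saturated Th I /\ indecomposable Th I) <->
   (forall (O : Type) (ltO : O -> O -> Prop), well_order ltO ->
    forall S : K -> O -> Prop,
      (forall a, card_lt (S a) (@full Th)) ->
    forall h : Th -> K -> O,
      (forall i a, S a (h i a)) ->
      (forall i j a, ltT i j -> ltO (h i a) (h j a) \/ h i a = h j a) ->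
      exists istar : Th,
        forall i, ~ ltT i istar -> I (fun a => h i a <> h istar a))).
Proof.
  intros HK HT HTK HI.
  destruct (inhab ltT HT) as [t0 _].
  destruct HTK as [[fk _] _].
  set (k0 := proj1_sig (fk (exist _ t0 Logic.I))).
  split.
  - intros [WS IND]. exact (dir12 K ltK Th ltT I k0 t0 HT HI WS IND).
  - intros H2. pose proof (dir21 K ltK Th ltT I HT HI H2) as L2.
    pose proof HT as [[[wf [tr [irr tri]]] segsmall] _].
    pose proof HI as [_ [down [union _]]].
    split.
    + intros [P [Pd [Pc Pp]]].
      set (p := fun a => proj1_sig (constructive_indefinite_description _ (Pc a))).
      assert (pP : forall a, P (p a) a).
      { intro a. unfold p. destruct (constructive_indefinite_description _ _) as [i Hi]; exact Hi. }
      destruct (L2 p) as [t Ht]. destruct (succ ltT HT t) as [x Hx].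
      apply (Pp x). apply (down _ _ Ht). intros a Pxa.
      destruct (classic (p a = x)) as [e|ne].
      * rewrite e; auto.
      * exfalso; exact (Pd _ _ a ne (pP a) Pxa).
    + intros A HU. apply NNPP; intro N.
      assert (N' : forall w, card_lt w (@full Th) -> I (fun a => exists i, w i /\ A i a)).
      { intros w cw; apply NNPP; intro; apply N; eauto. }
      assert (ex : forall a, exists i, (exists j, A j a) -> A i a).
      { intro a; destruct (classic (exists j, A j a)) as [[j Hj]|n].
        - exists j; auto.
        - exists t0; intro c; contradiction. }
      set (p := fun a => proj1_sig (constructive_indefinite_description _ (ex a))).
      assert (pA : forall a, (exists j, A j a) -> A (p a) a).
      { intro a. unfold p. destruct (constructive_indefinite_description _ _) as [i Hi]; exact Hi. }
      destruct (L2 p) as [t Ht]. destruct (succ ltT HT t) as [x Hx].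
      pose proof (N' (fun j => ltT j x) (segsmall x)) as Hw.
      apply HU. apply (down _ _ (union _ _ Ht Hw)). intros a Ha.
      pose proof (pA a Ha) as Hp.
      destruct (classic (ltT t (p a))) as [l|nl]; [left; auto| right; exists (p a); split; auto].
      destruct (tri (p a) t) as [l|[e|l]]; [eauto| subst; auto | contradiction].
Qed.
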